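(* Let $p\in\mathbb P^2(\mathbb R)$ and let $l$ be a real line through $p$; fix affine coordinates centered at $p$ in which $l=\{y=0\}$. Let $f\in F_{(p,l)}$ and $g\in I_{(p,l)}$. If $\operatorname{ord}_p(f)=2$ and $D_f''(0)\neq0$, then there exist a neighborhood $U\subseteq\mathbb P^2(\mathbb R)$ of $p$ and $\epsilon>0$ such that $f+\epsilon g$ is nonnegative on $U$.
   Context: $H_k\subseteq\mathbb R[x,y,z]$ is the space of real ternary forms of degree $k$; $P_{3,4}=\{f\in H_4: f\ge0 \text{ on }\mathbb P^2(\mathbb R)\}$. Local notation. For $p\in\mathbb P^2(\mathbb R)$, affine coordinates centered at $p$ are obtained by an invertible real linear change of coordinates sending $p$ to $(0:0:1)$ followed by setting $z=1$; $f\in H_4$ becomes $f(x,y)=\sum_{i+j\le4}a_{ij}x^iy^j=f_0+\dots+f_4$ ($f_k$ homogeneous of degree $k$), and $\operatorname{ord}_p(f)$ is the least $k$ with $f_k\ne0$. For $\operatorname{ord}_pf\ge2$ put $\tilde f(x,y)=f(x,xy)/x^2=f_2(1,y)+xf_3(1,y)+x^2f_4(1,y)$. The discriminant of $f$ at $p$ is $D_f(y)=(f_3^2-4f_2f_4)(1,y)\in\mathbb R[y]$ (the discriminant of $\tilde f$ viewed as a quadratic polynomial in $x$). With coordinates centered at $p$ and $l=\{y=0\}$: $F_{(p,l)}=\{f\in P_{3,4}: f(p)=0,\ \tilde f(0,0)=0\}$ and $I_{(p,l)}=\{f\in H_4: a_{00}=a_{10}=a_{01}=a_{20}=a_{11}=a_{30}=0\}$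 (equivalently $\operatorname{ord}_pf\ge2$ and $\operatorname{ord}_{(0,0)}\tilde f\ge2$). *)

(* Defs.v *)
(* A real ternary quartic form, written in affine
   coordinates centered at p = (0:0:1) with l = {y = 0}, is given by its
   coefficient table a : nat -> nat -> R, where a i j is the coefficient of
   x^i y^j z^(4-i-j) (only entries with i + j <= 4 are used). *)
From HB Require Import structures.
From mathcomp Require Import all_boot all_order all_algebra.
Set Implicit Arguments. Unset Strict Implicit. Unset Printing Implicit Defensive.
Import Order.TTheory GRing.Theory Num.Theory.
Local Open Scope ring_scope.

Section Forms.
Variable R : rcfType.

Definition feval (a : nat -> nat -> R) (x y z : R) : R :=
  \sum_(i < 5) \sum_(j < 5 | (i + j <= 4)%N)
     a i j * x ^+ i * y ^+ j * z ^+ (4 - i - j).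

Definition psd4 (a : nat -> nat -> R) : Prop :=
  forall x y z : R, 0 <= feval a x y z.

(* f_k(1,y) as a univariate polynomial in y *)
Definition hpart (a : nat -> nat -> R) (k : nat) : {poly R} :=
  \sum_(j < k.+1) a (k - j)%N j *: 'X^j.

Definition tildef (a : nat -> nat -> R) (x y : R) : R :=
  (hpart a 2).[y] + x * (hpart a 3).[y] + x ^+ 2 * (hpart a 4).[y].

Definition discf (a : nat -> nat -> R) : {poly R} :=
  hpart a 3 ^+ 2 - 4%:R *: (hpart a 2 * hpart a 4).

Definition hzero (a : nat -> nat -> R) (k : nat) : Prop :=
  forall i, (i <= k)%N -> a i (k - i)%N = 0.

Definition ordp_eq (a : nat -> nat -> R) (n : nat) : Prop :=
  (forall k, (k < n)%N -> hzero a k) /\ ~ hzero a n.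

Definition inF (a : nat -> nat -> R) : Prop :=
  psd4 a /\ a 0%N 0%N = 0 /\ tildef a 0 0 = 0.

Definition inI (b : nat -> nat -> R) : Prop :=
  b 0%N 0%N = 0 /\ b 1%N 0%N = 0 /\ b 0%N 1%N = 0 /\
  b 2%N 0%N = 0 /\ b 1%N 1%N = 0 /\ b 3%N 0%N = 0.

End Forms.

(* Main.v *)
Require Import Defs.
From HB Require Import structures.
From mathcomp Require Import all_boot all_order all_algebra.
From mathcomp Require Import ring lra.
Import Order.TTheory GRing.Theory Num.Theory.
Local Open Scope ring_scope.

Lemma feval_exp (R : rcfType) (a : nat -> nat -> R) x y z :
  feval a x y z =
  a 0%N 0%N * z^+4 + a 1%N 0%N * x * z^+3 + a 0%N 1%N * y * z^+3
  + a 2%N 0%N * x^+2 * z^+2 + a 1%N 1%N * x * y * z^+2 + a 0%N 2%N * y^+2 * z^+2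
  + a 3%N 0%N * x^+3 * z + a 2%N 1%N * x^+2 * y * z + a 1%N 2%N * x * y^+2 * z + a 0%N 3%N * y^+3 * z
  + a 4%N 0%N * x^+4 + a 3%N 1%N * x^+3 * y + a 2%N 2%N * x^+2*y^+2 + a 1%N 3%N * x * y^+3 + a 0%N 4%N * y^+4.
Proof.
rewrite /feval.
under eq_bigr do rewrite big_mkcond.
rewrite !big_ord_recr !big_ord0 /=.
ring.
Qed.

Lemma hpart_exp (R : rcfType) (a : nat -> nat -> R) :
  [/\ hpart a 2 = a 2%N 0%N *: 1 + a 1%N 1%N *: 'X + a 0%N 2%N *: 'X^2,
      hpart a 3 = a 3%N 0%N *: 1 + a 2%N 1%N *: 'X + a 1%N 2%N *: 'X^2 + a 0%N 3%N *: 'X^3 &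
      hpart a 4 = a 4%N 0%N *: 1 + a 3%N 1%N *: 'X + a 2%N 2%N *: 'X^2 + a 1%N 3%N *: 'X^3 + a 0%N 4%N *: 'X^4].
Proof.
by rewrite /hpart !big_ord_recr !big_ord0 /= !add0r expr0 expr1.
Qed.

Lemma disc_val (R : rcfType) (a : nat -> nat -> R) :
  (discf a)^`(2).[0] = 2 * (2 * a 3%N 0%N * a 1%N 2%N + a 2%N 1%N ^+ 2
     - 4 * (a 2%N 0%N * a 2%N 2%N + a 1%N 1%N * a 3%N 1%N + a 0%N 2%N * a 4%N 0%N)).
Proof.
rewrite horner_coef0 coef_derivn /discf coefB coefZ expr2 !coefM.
rewrite !big_ord_recr !big_ord0 /=.
have [-> -> ->] := @hpart_exp R a.
rewrite !coefE /=.
have -> : ((2+0)^_2 = 2)%N by []. ring.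
Qed.
Section Aux.
Variable R : rcfType.

Lemma lin0 (c d : R) : (forall t, 0 <= c * t + d) -> c = 0.
Proof.
move=> H; apply/eqP; apply/negPn/negP => hc.
have := H (-(`|d| + 1) / c).
have -> : c * (-(`|d| + 1) / c) = -(`|d| + 1) by field.
have := ler_norm d; lra.
Qed.

Lemma quadA (A B C : R) : (forall z, 0 <= A * z ^+ 2 + B * z + C) -> 0 <= A.
Proof.
move=> H; rewrite leNgt; apply/negP => hA.
set w := (`|B| + `|C|) / (- A).
have w0 : 0 <= w by rewrite /w divr_ge0 // ?addr_ge0 // oppr_ge0 ltW.
have Aw : A * w = - (`|B| + `|C|) by rewrite /w; field; rewrite lt_eqF.
have := H (1 + w).
have h1 : B * (1 + w) <= `|B| * (1 + w) by rewrite ler_wpM2r ?ler_norm // addr_ge0.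
have h2 : C <= `|C| * (1 + w).
  apply: le_trans (ler_norm C) _; rewrite ler_peMr //; lra.
have -> : A * (1 + w) ^+ 2 = (A + A * w) * (1 + w) by ring.
rewrite Aw.
have h3 : A * (1 + w) < 0 by rewrite pmulr_llt0 //; lra.
nra.
Qed.

Lemma small_x (c0 c1 c2 c3 c4 : R) : c0 < 0 ->
  exists x, 0 < x /\ c0 + c1 * x + c2 * x ^+ 2 + c3 * x ^+ 3 + c4 * x ^+ 4 < 0.
Proof.
move=> h0.
set M := `|c1| + `|c2| + `|c3| + `|c4|.
have M0 : 0 <= M by rewrite /M !addr_ge0.
set x := - c0 / (2 * (M - c0)).
have d0 : 0 < 2 * (M - c0) by lra.
have x0 : 0 < x by rewrite /x divr_gt0 //; lra.
have x1 : x <= 1 by rewrite /x ler_pdivrMr //; lra.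
have xM : x * M <= - c0 / 2.
  rewrite /x mulrAC ler_pdivrMr // -mulrA ler_wpM2l //; first lra. lra.
exists x; split => //.
have b : forall (c : R) k, (0 < k)%N -> c * x ^+ k <= `|c| * x.
  move=> c k hk; apply: le_trans (ler_norm _) _.
  rewrite normrM normrX (ger0_norm (ltW x0)); apply: ler_wpM2l => //.
  by rewrite -[X in _ <= X]expr1; apply: ler_wiXn2l => //; exact: ltW.
have := b c1 1%N isT; have := b c2 2%N isT; have := b c3 3%N isT; have := b c4 4%N isT.
rewrite expr1.
move: xM; rewrite /M; nra.
Qed.


Lemma coef_low (c h T : R) : `|h| <= T -> - (`|c| * T) <= c * h.
Proof.
move=> hT; have := ler_norm (- (c * h)); rewrite normrN normrM => H.
have : `|c| * `|h| <= `|c| * T by apply: ler_wpM2l.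
lra.
Qed.

Lemma sq_form (A B C X Y : R) : 0 < A -> B ^+ 2 < 4 * A * C ->
  (4 * A * C - B ^+ 2) / (4 * (A + C)) * (X ^+ 2 + Y ^+ 2) <= A * Y ^+ 2 + B * X * Y + C * X ^+ 2.
Proof.
move=> hA hD.
have hC : 0 < C by nra.
have h4 : 0 < 4 * (A + C) by lra.
rewrite mulrAC ler_pdivrMr //.
have := sqr_ge0 (2 * A * Y + B * X); have := sqr_ge0 (2 * C * X + B * Y).
nra.
Qed.

Lemma mono_bounds (d x y : R) : 0 < d -> d <= 1 -> `|x| < d -> `|y| < d ->
  let S := x ^+ 4 + y ^+ 2 in
  [/\ `|x * y ^+ 2| <= d * S, `|y ^+ 3| <= d * S, `|x ^+ 3 * y| <= d * S,
      `|x ^+ 2 * y ^+ 2| <= d * S & `|x * y ^+ 3| <= d * S /\ `|y ^+ 4| <= d * S].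
Proof.
move=> d0 d1 hx hy S.
have ex4 : x ^+ 4 = `|x| ^+ 4 by rewrite -normrX ger0_norm // exprn_even_ge0.
have ey2 : y ^+ 2 = `|y| ^+ 2 by rewrite real_normK ?num_real.
rewrite /S !normrX !normrM ex4 ey2.
set u := `|x|; set v := `|y|.
have u0 : 0 <= u by rewrite normr_ge0.
have v0 : 0 <= v by rewrite normr_ge0.
have u4 : 0 <= u ^+ 4 by rewrite exprn_ge0.
have uv : 0 <= u * v ^+ 2 by rewrite mulr_ge0 // exprn_ge0.
have vv : 0 <= v ^+ 2 by rewrite exprn_ge0.
have hS : d * v ^+ 2 <= d * (u ^+ 4 + v ^+ 2) by rewrite ler_pM2l //; lra.
have du : u <= d by exact: ltW.
have dv : v <= d by exact: ltW.
split.
- apply: le_trans hS; apply: ler_wpM2r => //.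
- apply: le_trans hS; have -> : v ^+ 3 = v * v ^+ 2 by ring.
  apply: ler_wpM2r => //.
- have h : 2 * (u ^+ 2 * v) <= u ^+ 4 + v ^+ 2 by have := sqr_ge0 (u ^+ 2 - v); nra.
  have h2 : u ^+ 2 * v <= u ^+ 4 + v ^+ 2.
    have : 0 <= u ^+ 2 * v by rewrite mulr_ge0 // exprn_ge0.
    lra.
  have -> : u ^+ 3 * v = u * (u ^+ 2 * v) by ring.
  apply: ler_pM => //; by rewrite mulr_ge0 // exprn_ge0.
- apply: le_trans hS; apply: ler_wpM2r => //.
  nra.
- split.
  apply: le_trans hS; have -> : u * (v * (v * v)) = (u * v) * v ^+ 2 by ring.
  apply: ler_wpM2r => //; nra.
  apply: le_trans hS; have -> : v ^+ 4 = v ^+ 2 * v ^+ 2 by ring.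
  apply: ler_wpM2r => //; nra.
Qed.


Lemma local_pos (A B C a12 a03 a31 a22 a13 a04 b02 b21 b40 b12 b03 b31 b22 b13 b04 : R) :
  0 < A -> B ^+ 2 < 4 * A * C ->
  exists delta : R, 0 < delta /\ exists eps : R, 0 < eps /\
    forall x y : R, `|x| < delta -> `|y| < delta ->
   0 <= (A * y ^+ 2 + B * x ^+ 2 * y + C * x ^+ 4
         + (a12 * (x * y ^+ 2) + a03 * y ^+ 3 + a31 * (x ^+ 3 * y)
            + a22 * (x ^+ 2 * y ^+ 2) + a13 * (x * y ^+ 3) + a04 * y ^+ 4))
     + eps * (b02 * y ^+ 2 + b21 * x ^+ 2 * y + b40 * x ^+ 4
         + (b12 * (x * y ^+ 2) + b03 * y ^+ 3 + b31 * (x ^+ 3 * y)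
            + b22 * (x ^+ 2 * y ^+ 2) + b13 * (x * y ^+ 3) + b04 * y ^+ 4)).
Proof.
move=> hA hD.
have hC : 0 < C by nra.
set m := (4 * A * C - B ^+ 2) / (4 * (A + C)).
have m0 : 0 < m by rewrite /m divr_gt0 //; lra.
set L0 := `|b02| + `|b21| + `|b40|.
have L00 : 0 <= L0 by rewrite /L0 !addr_ge0.
set eps := m / (2 * (L0 + 1)).
have e0 : 0 < eps by rewrite /eps divr_gt0 //; lra.
have eL : eps * L0 <= m / 2.
  rewrite /eps mulrAC ler_pdivrMr; last lra.
  have -> : m / 2 * (2 * (L0 + 1)) = m * L0 + m by field.
  lra.
set Ka := `|a12| + `|a03| + `|a31| + `|a22| + `|a13| + `|a04|.
set Kb := `|b12| + `|b03| + `|b31| + `|b22| + `|b13| + `|b04|.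
have Ka0 : 0 <= Ka by rewrite /Ka !addr_ge0.
have Kb0 : 0 <= Kb by rewrite /Kb !addr_ge0.
set K := Ka + eps * Kb + 1.
have K0 : 0 < K by rewrite /K; have := mulr_ge0 (ltW e0) Kb0; lra.
set delta := m / (4 * K + m).
have d0 : 0 < delta by rewrite /delta divr_gt0 //; lra.
have d1 : delta <= 1 by rewrite /delta ler_pdivrMr; lra.
have dK : delta * K <= m / 4.
  rewrite /delta mulrAC ler_pdivrMr; last lra.
  have -> : m / 4 * (4 * K + m) = m * K + m * m / 4 by field.
  have : 0 <= m * m / 4 by rewrite divr_ge0 // mulr_ge0 // ltW.
  lra.
exists delta; split => //; exists eps; split => // x y hx hy.
have [h1 h2 h3 h4 [h5 h6]] := @mono_bounds delta x y d0 d1 hx hy.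
set S := x ^+ 4 + y ^+ 2 in h1 h2 h3 h4 h5 h6 *.
have S0 : 0 <= S by rewrite /S addr_ge0 // ?exprn_even_ge0.
set T := delta * S in h1 h2 h3 h4 h5 h6 *.
have Ha : - (Ka * T) <= a12 * (x * y ^+ 2) + a03 * y ^+ 3 + a31 * (x ^+ 3 * y)
            + a22 * (x ^+ 2 * y ^+ 2) + a13 * (x * y ^+ 3) + a04 * y ^+ 4.
  have := @coef_low a12 _ _ h1; have := @coef_low a03 _ _ h2; have := @coef_low a31 _ _ h3.
  have := @coef_low a22 _ _ h4; have := @coef_low a13 _ _ h5; have := @coef_low a04 _ _ h6.
  rewrite /Ka; lra.
have Hb : - (Kb * T) <= b12 * (x * y ^+ 2) + b03 * y ^+ 3 + b31 * (x ^+ 3 * y)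
            + b22 * (x ^+ 2 * y ^+ 2) + b13 * (x * y ^+ 3) + b04 * y ^+ 4.
  have := @coef_low b12 _ _ h1; have := @coef_low b03 _ _ h2; have := @coef_low b31 _ _ h3.
  have := @coef_low b22 _ _ h4; have := @coef_low b13 _ _ h5; have := @coef_low b04 _ _ h6.
  rewrite /Kb; lra.
have Q := @sq_form A B C (x ^+ 2) y hA hD.
rewrite -/m in Q.
have ex4 : x ^+ 4 = (x ^+ 2) ^+ 2 by rewrite -exprM.
have XY : `|x ^+ 2 * y| <= S.
  rewrite /S ex4 normrM.
  have := sqr_ge0 (`|x ^+ 2| - `|y|).
  rewrite -[(x ^+ 2) ^+ 2](real_normK (num_real _)) -[y ^+ 2](real_normK (num_real _)).
  have := normr_ge0 (x ^+ 2); have := normr_ge0 y. nra.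
have y2S : y ^+ 2 <= S by rewrite /S; have := @exprn_even_ge0 _ 4 x isT; lra.
have x4S : x ^+ 4 <= S by rewrite /S; have := sqr_ge0 y; lra.
have Qb : - (L0 * S) <= b02 * y ^+ 2 + b21 * x ^+ 2 * y + b40 * x ^+ 4.
  have y2S' : `|y ^+ 2| <= S by rewrite ger0_norm // exprn_even_ge0.
  have x4S' : `|x ^+ 4| <= S by rewrite ger0_norm // exprn_even_ge0.
  have := @coef_low b02 _ _ y2S'; have := @coef_low b21 _ _ XY; have := @coef_low b40 _ _ x4S'.
  rewrite /L0; lra.
rewrite -/m -ex4 -/S in Q.
have eQb : - (eps * (L0 * S)) <= eps * (b02 * y ^+ 2 + b21 * x ^+ 2 * y + b40 * x ^+ 4).
  by rewrite -mulrN; apply: ler_wpM2l => //; exact: ltW.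
have eHb : - (eps * (Kb * T)) <= eps * (b12 * (x * y ^+ 2) + b03 * y ^+ 3 + b31 * (x ^+ 3 * y)
            + b22 * (x ^+ 2 * y ^+ 2) + b13 * (x * y ^+ 3) + b04 * y ^+ 4).
  by rewrite -mulrN; apply: ler_wpM2l => //; exact: ltW.
have T0 : 0 <= T by rewrite /T mulr_ge0 // ltW.
have KT : K * T <= m / 4 * S.
  have -> : K * T = (delta * K) * S by rewrite /T; ring.
  by apply: ler_wpM2r.
have LS : eps * L0 * S <= m / 2 * S by apply: ler_wpM2r.
have mS : 0 <= m * S by rewrite mulr_ge0 // ltW.
move: KT; rewrite /K => KT.
lra.
Qed.


End Aux.

Theorem mainTheorem3 (R : rcfType) (a b : nat -> nat -> R) :
  inF a -> inI b -> ordp_eq a 2 -> (discf a)^`(2).[0] != 0 ->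
  exists delta : R, 0 < delta /\ exists eps : R, 0 < eps /\
    forall x y : R, `|x| < delta -> `|y| < delta ->
      0 <= feval a x y 1 + eps * feval b x y 1.
Proof.
move=> [psd [a00 ta]] [b00 [b10 [b01 [b20 [b11 b30]]]]] [hz nhz2] hdisc.
have [a01 a10] : a 0%N 1%N = 0 /\ a 1%N 0%N = 0.
  by have := hz 1%N isT; move=> h; split; [exact: (h 0%N) | exact: (h 1%N)].
have a20 : a 2%N 0%N = 0.
  move: ta; rewrite /tildef; have [-> _ _] := @hpart_exp R a.
  by rewrite !hornerE /= !mulr0 expr0n /= mul0r !addr0.
have P : forall x y z, 0 <= feval a x y z by [].
have a11 : a 1%N 1%N = 0.
  apply: (@lin0 _ _ (a 0%N 2%N)) => t.
  apply: (@quadA _ _ (a 3%N 0%N * t ^+ 3 + a 2%N 1%N * t ^+ 2 + a 1%N 2%N * t + a 0%N 3%N)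
      (a 4%N 0%N * t ^+ 4 + a 3%N 1%N * t ^+ 3 + a 2%N 2%N * t ^+ 2 + a 1%N 3%N * t + a 0%N 4%N)) => z.
  have := P t 1 z; rewrite feval_exp a00 a01 a10 a20.
  by move=> h; apply: le_trans h _; rewrite le_eqVlt; apply/orP; left; apply/eqP; ring.
have a02p : 0 <= a 0%N 2%N.
  apply: (@quadA _ _ (a 3%N 0%N * 0 ^+ 3 + a 2%N 1%N * 0 ^+ 2 + a 1%N 2%N * 0 + a 0%N 3%N)
      (a 4%N 0%N * 0 ^+ 4 + a 3%N 1%N * 0 ^+ 3 + a 2%N 2%N * 0 ^+ 2 + a 1%N 3%N * 0 + a 0%N 4%N)) => z.
  have := P 0 1 z; rewrite feval_exp a00 a01 a10 a20 a11.
  by move=> h; apply: le_trans h _; rewrite le_eqVlt; apply/orP; left; apply/eqP; ring.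
have a02n : a 0%N 2%N != 0.
  apply/eqP => h; apply: nhz2 => -[|[|[|i]]] //= _; by rewrite ?h ?a11 ?a20.
have a02g : 0 < a 0%N 2%N by rewrite lt_def a02n.
have a30 : a 3%N 0%N = 0.
  apply: (@lin0 _ _ (a 4%N 0%N)) => z.
  have := P 1 0 z; rewrite feval_exp a00 a01 a10 a20 a11.
  by move=> h; apply: le_trans h _; rewrite le_eqVlt; apply/orP; left; apply/eqP; ring.
move: hdisc; rewrite disc_val a30 a20 a11 => hdisc.
have hD : a 2%N 1%N ^+ 2 < 4 * a 0%N 2%N * a 4%N 0%N.
  rewrite ltNge; apply/negP => hge.
  set t := - a 2%N 1%N / (2 * a 0%N 2%N).
  set c0 := a 0%N 2%N * t ^+ 2 + a 2%N 1%N * t + a 4%N 0%N.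
  have ec : 4 * a 0%N 2%N * c0 = 4 * a 0%N 2%N * a 4%N 0%N - a 2%N 1%N ^+ 2.
    by rewrite /c0 /t; field.
  have hne : 4 * a 0%N 2%N * a 4%N 0%N - a 2%N 1%N ^+ 2 != 0.
    apply: contra hdisc => /eqP h; apply/eqP.
    have e : a 2%N 1%N ^+ 2 = 4 * a 0%N 2%N * a 4%N 0%N by move: h; lra.
    rewrite e; ring.
  have c0n : c0 < 0.
    have : 4 * a 0%N 2%N * c0 < 0 by rewrite ec lt_neqAle hne /=; lra.
    rewrite pmulr_rlt0 //; lra.
  have [x [x0 hx]] := @small_x _ c0 (a 1%N 2%N * t ^+ 2 + a 3%N 1%N * t)
     (a 0%N 3%N * t ^+ 3 + a 2%N 2%N * t ^+ 2) (a 1%N 3%N * t ^+ 3) (a 0%N 4%N * t ^+ 4) c0n.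
  have x4 : 0 < x ^+ 4 by rewrite exprn_gt0.
  have : 0 <= x ^+ 4 * (c0 + (a 1%N 2%N * t ^+ 2 + a 3%N 1%N * t) * x
     + (a 0%N 3%N * t ^+ 3 + a 2%N 2%N * t ^+ 2) * x ^+ 2 + (a 1%N 3%N * t ^+ 3) * x ^+ 3
     + (a 0%N 4%N * t ^+ 4) * x ^+ 4).
    have := P x (t * x ^+ 2) 1; rewrite feval_exp a00 a01 a10 a20 a11 a30.
    by move=> h; apply: le_trans h _; rewrite le_eqVlt; apply/orP; left; apply/eqP; rewrite /c0; ring.
  rewrite pmulr_rge0 //; lra.
have [delta [d0 [eps [e0 H]]]] := @local_pos _ (a 0%N 2%N) (a 2%N 1%N) (a 4%N 0%N)
  (a 1%N 2%N) (a 0%N 3%N) (a 3%N 1%N) (a 2%N 2%N) (a 1%N 3%N) (a 0%N 4%N)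
  (b 0%N 2%N) (b 2%N 1%N) (b 4%N 0%N)
  (b 1%N 2%N) (b 0%N 3%N) (b 3%N 1%N) (b 2%N 2%N) (b 1%N 3%N) (b 0%N 4%N) a02g hD.
exists delta; split => //; exists eps; split => // x y hx hy.
have := H x y hx hy.
rewrite !feval_exp a00 a01 a10 a20 a11 a30 b00 b10 b01 b20 b11 b30.
move=> h; apply: le_trans h _; rewrite le_eqVlt; apply/orP; left; apply/eqP; ring.
Qed.
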